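(* Every finite brace of square-free order is supersoluble.
   Context: A brace (skew left brace) is a set $B$ with two binary operations $+$ and $\cdot$ such that $(B,+)$ and $(B,\cdot)$ are groups and $a(b+c)=ab-a+ac$ for all $a,b,c\in B$; its order is $|B|$. For $a,b\in B$ put $\lambda_a(b)=-a+ab$; $\lambda\colon(B,\cdot)\to\operatorname{Aut}(B,+)$ is a homomorphism. An ideal of $B$ is a subset that is a subgroup of both groups, normal in $(B,+)$ and in $(B,\cdot)$, and invariant under all $\lambda_b$; quotients $B/I$ by ideals are braces. $\operatorname{Soc}(B)=\operatorname{Ker}\lambda\cap Z(B,+)$. A brace $B$ is supersoluble if there is a finite chain of ideals $\{0\}=I_0\le\dots\le I_n=B$ such that for each $i$, either $(I_{i+1}/I_i,+)$ is infinite cyclic and $I_{i+1}/I_i\le\operatorname{Soc}(B/I_i)$, or $I_{i+1}/I_i$ has prime order. *)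

(* Defs.v *)
From mathcomp Require Import all_boot all_algebra.
Set Implicit Arguments. Unset Strict Implicit. Unset Printing Implicit Defensive.

Record brace (T : finType) := Brace {
  badd : T -> T -> T; bzero : T; bopp : T -> T;
  bmul : T -> T -> T; bone : T; binv : T -> T;
  baddA : forall a b c, badd a (badd b c) = badd (badd a b) c;
  badd0l : forall a, badd bzero a = a;
  badd0r : forall a, badd a bzero = a;
  baddNl : forall a, badd (bopp a) a = bzero;
  baddNr : forall a, badd a (bopp a) = bzero;
  bmulA : forall a b c, bmul a (bmul b c) = bmul (bmul a b) c;
  bmul1l : forall a, bmul bone a = a;
  bmul1r : forall a, bmul a bone = a;
  bmulVl : forall a, bmul (binv a) a = bone;
  bmulVr : forall a, bmul a (binv a) = bone;
  bdist : forall a b c,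
    bmul a (badd b c) = badd (badd (bmul a b) (bopp a)) (bmul a c)
}.

Section BraceDefs.
Variables (T : finType) (B : brace T).

Local Notation "x + y" := (badd B x y).
Local Notation "- x" := (bopp B x).
Local Notation "x * y" := (bmul B x y).

Definition blambda (a b : T) : T := - a + a * b.

Definition bnatmul (g : T) (n : nat) : T := iter n (fun y => y + g) (bzero B).
Definition bintmul (g : T) (z : int) : T :=
  match z with Posz n => bnatmul g n | Negz n => - bnatmul g n.+1 end.

Definition is_ideal (I : {set T}) : Prop :=
  (bzero B \in I /\
   (forall x y, x \in I -> y \in I -> x + y \in I) /\
   (forall x, x \in I -> - x \in I)) /\
  (bone B \in I /\
   (forall x y, x \in I -> y \in I -> x * y \in I) /\
   (forall x, x \in I -> binv B x \in I)) /\
  (forall b x, x \in I -> b + x + - b \in I) /\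
  (forall b x, x \in I -> b * x * binv B b \in I) /\
  (forall b x, x \in I -> blambda b x \in I).

Definition bcoset (I : {set T}) (x : T) : {set T} := [set x + y | y in I].

Definition quot_order (I J : {set T}) : nat := #|[set bcoset I x | x in J]|.

Definition quot_inf_cyclic (I J : {set T}) : Prop :=
  exists2 g, g \in J &
    (forall x, x \in J -> exists z : int, bcoset I x = bcoset I (bintmul g z)) /\
    (forall z : int, z != 0%R -> bcoset I (bintmul g z) != bcoset I (bzero B)).

(* J/I <= Soc(B/I) = Ker lambda ∩ Z(B/I,+), written out on cosets *)
Definition quot_in_socle (I J : {set T}) : Prop :=
  forall x, x \in J -> forall b,
    bcoset I (blambda x b) = bcoset I b /\ bcoset I (x + b) = bcoset I (b + x).

Definition supersoluble : Prop :=
  exists (n : nat) (I : nat -> {set T}),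
    [/\ I 0%N = [set bzero B], I n = [set: T],
        (forall i, (i <= n)%N -> is_ideal (I i))
      & (forall i, (i < n)%N ->
           I i \subset I i.+1 /\
           ((quot_inf_cyclic (I i) (I i.+1) /\ quot_in_socle (I i) (I i.+1))
            \/ prime (quot_order (I i) (I i.+1))))].

End BraceDefs.

Definition squarefree (n : nat) : Prop := forall p, prime p -> ~~ (p * p %| n)%N.

(* Main.v *)
Require Import Defs.
From HB Require Import structures.
From mathcomp Require Import all_boot all_algebra.
From mathcomp Require Import all_fingroup all_solvable.
From mathcomp Require Import zify.
Set Implicit Arguments. Unset Strict Implicit. Unset Printing Implicit Defensive.

Local Open Scope group_scope.
Lemma card_fmod (gT : finGroupType) (A : {group gT}) (abA : abelian A) : #|[set: FiniteModule.fmod_of abA]| = #|A|.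
Proof. by rewrite cardsT card_sub; apply: eq_card. Qed.

Section Comp.
Variable gT : finGroupType.
Implicit Types G P K : {group gT}.

Lemma prime_gen_eq (P : {group gT}) g : prime #|P| -> g \in P -> (g != 1)%g ->
  (<[g]> = P)%g /\ (#[g])%g = #|P|.
Proof.
move=> prP Pg ng1.
have o : (#[g])%g = #|P|.
  case/primeP: (prP) => _ H; case/orP: (H _ (order_dvdG Pg)) => /eqP // o1.
  by move/eqP: o1; rewrite order_eq1 (negbTE ng1).
split=> //; apply/eqP; rewrite eqEcard cycle_subG Pg /= -orderE o leqnn //.
Qed.

Lemma norm_sub_cent G P p : prime p -> #|P| = p -> P \subset G ->
  (forall q, prime q -> q %| #|G| -> p <= q) -> 'N_G(P) \subset 'C(P).
Proof.
move=> pr_p oP sPG minp.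
set N := 'N_G(P).
have sNN : N \subset 'N(P) := subsetIr _ _.
have dv : #|N : 'C(P)| %| p.-1.
  have := cardSg (Aut_conj_aut P N).
  by rewrite card_morphim ker_conj_aut (setIidPr sNN) card_Aut_cyclic
    ?prime_cyclic ?oP // totient_prime.
have dvG : #|N : 'C(P)| %| #|G|.
  exact: dvdn_trans (dvdn_indexg _ _) (cardSg (subsetIl G _)).
rewrite -indexg_eq1; set m := #|N : _| in dv dvG *.
have m0 : 0 < m by apply: indexg_gt0.
case: (ltngtP m 1%N) => // [|m1]; first by lia.
have prr := pdiv_prime m1.
have h1 := minp _ prr (dvdn_trans (pdiv_dvd m) dvG).
have p1 := prime_gt1 pr_p.
have h2 : pdiv m <= p.-1 by apply: dvdn_leq; [lia | exact: dvdn_trans (pdiv_dvd m) dv].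
lia.
Qed.

Lemma normal_complement G p : prime p -> p %| #|G| -> ~~ (p * p %| #|G|)%N ->
  (forall q, prime q -> q %| #|G| -> p <= q) ->
  exists2 K : {group gT}, K <| G & (#|K| * p)%N = #|G|.
Proof.
move=> pr_p pG npp minp.
have [P sylP] := Sylow_exists p G.
have sPG := pHall_sub sylP.
have G0 : 0 < #|G| := cardG_gt0 G.
have lg : logn p #|G| = 1%N.
  have a : (1 <= logn p #|G|)%N by rewrite -pfactor_dvdn ?expn1.
  have b : ~~ (2 <= logn p #|G|)%N by rewrite -pfactor_dvdn.
  lia.
have oP : #|P| = p by rewrite (card_Hall sylP) p_part lg expn1.
have prP : prime #|P| by rewrite oP.
have abP : abelian P := cyclic_abelian (prime_cyclic prP).
have abelA : abelian (idm P @* P) by rewrite morphim_idm.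
have AP : forall y, y \in P -> y \in idm P @* P by move=> y; rewrite morphim_idm.
have NC := norm_sub_cent pr_p oP sPG minp.
pose f := transfer_morphism G abelA.
have key : forall g, g \in P -> f g = FiniteModule.fmod abelA (g ^+ #|G : P|)%g.
  move=> g Pg; have Gg := subsetP sPG g Pg.
  have trX := transversalP (rcosets_cycle_partition sPG Gg).
  rewrite /f /= (transfer_cycle_expansion sPG abelA Gg trX).
  rewrite -(sum_index_rcosets_cycle sPG Gg trX).
  have sXG := transversal_sub trX.
  have fX : forall n, FiniteModule.fmod abelA (g ^+ n) = (FiniteModule.fmod abelA g *+ n)%R.
    by move=> n; apply: FiniteModule.fmodX; apply: AP.
  transitivity (\sum_(x in transversal (rcosets P G :* <[g]>) G)
                  (FiniteModule.fmod abelA g *+ #|<[g]> : P :* x|))%R.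
    apply: eq_bigr => x Xx.
    set u := g ^+ _.
    have Pu : u \in P by rewrite groupX.
    have Pux : (u ^ x^-1 \in P)%g.
      have := mulg_exp_card_rcosets P g x; rewrite -/u mem_rcoset.
      by rewrite conjgE invgK mulgA.
    have ux : (u ^ x^-1 = u)%g.
      have [->|nu1] := eqVneq u 1%g; first by rewrite conj1g.
      have [cu _] := prime_gen_eq prP Pu nu1.
      have Gx : (x^-1 \in G)%g by rewrite groupV (subsetP sXG).
      have Nx : (x^-1 \in 'N(P))%g.
        apply/normP/eqP; rewrite eqEcard cardJg leqnn andbT.
        by rewrite -{1}cu -cycleJ cycle_subG.
      have : (x^-1 \in 'C(P))%g by apply: (subsetP NC); rewrite inE Gx.
      move/centP => cx; by rewrite conjgE -(cx u Pu) mulgA mulVg mul1g.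

    by rewrite ux -fX. 
  by rewrite fX GRing.sumrMnr.
pose K := 'ker f.
have nKG : K <| G := ker_normal f.
exists [group of K] => //.
have sKG := normal_sub nKG.
have iKp : #|G : K| %| p.
  have := cardSg (subsetT (f @* G)).
  rewrite card_morphim setIid card_fmod /= morphim_idm // -oP; exact.
have [g Pg ng1] : exists2 g, g \in P & (g != 1)%g.
  apply/trivgPn; apply: contraTneq prP => ->; by rewrite cards1.
have [_ og] := prime_gen_eq prP Pg ng1.
have iK1 : #|G : K| != 1%N.
  rewrite indexg_eq1; apply/negP => sGK.
  have Kg : g \in K by apply: (subsetP sGK); apply: (subsetP sPG).
  have := mker Kg; rewrite key // => e.
  have : (g ^+ #|G : P| = 1)%g.
    by rewrite -(FiniteModule.fmodK abelA (AP _ (groupX _ Pg))) e.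
  move/eqP; rewrite -order_dvdn og oP => dvi.
  have := Lagrange sPG; rewrite oP => eG.
  move: npp; rewrite -eG; case/dvdnP: dvi => k ->.
  by rewrite mulnCA dvdn_mull.
have iKe : #|G : K| = p.
  case/primeP: pr_p => _ H; case/orP: (H _ iKp) => /eqP //.
  by move/eqP; rewrite (negbTE iK1).
by rewrite -(Lagrange sKG) iKe.
Qed.


Lemma tower (pi : nat_pred) G :
  (forall p, prime p -> ~~ (p * p %| #|G|)%N) ->
  (forall r s, prime r -> prime s -> r %| #|G| -> s %| #|G| -> (r <= s)%N ->
     r \in pi -> s \in pi) ->
  pi.-Hall(G) 'O_pi(G).
Proof.
have [n] := ubnP #|G|; elim: n G => // n IH G /ltnSE leGn sqf up.
have [piG|npiG] := boolP (pi.-group G).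
  by rewrite pcore_pgroup_id // pHallE subxx /= part_pnat_id.
have G1 : (1 < #|G|)%N.
  rewrite ltnNge; apply: contra npiG => h.
  have e : #|G| = 1%N by have := cardG_gt0 G; lia.
  by rewrite /pgroup e.
set q := pdiv #|G|.
have prq : prime q := pdiv_prime G1.
have qG : q %| #|G| := pdiv_dvd _.
have minq : forall r, prime r -> r %| #|G| -> (q <= r)%N.
  by move=> r pr rG; apply: pdiv_min_dvd (prime_gt1 pr) rG.
have [K nKG oK] := normal_complement prq qG (sqf q prq) minq.
have sKG := normal_sub nKG.
have dKG : #|K| %| #|G| by rewrite -oK dvdn_mulr.
have K0 := cardG_gt0 K.
have qpi : q \notin pi.
  apply: contra npiG => qpi; apply/pnatP => // s prs sG.
  exact: up q s prq prs qG sG (minq s prs sG) qpi.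
have hK : pi.-Hall(K) 'O_pi(K).
  apply: IH.
  - apply: leq_trans leGn; rewrite -oK ltn_Pmulr // prime_gt1 //.
  - by move=> p prp; apply: contra (sqf p prp) => h; apply: dvdn_trans h dKG.
  - move=> r s prr prs rK sK; apply: up => //; exact: dvdn_trans dKG.
have nOG : 'O_pi(K) <| G := char_normal_trans (pcore_char _ _) nKG.
have sOO : 'O_pi(K) \subset 'O_pi(G) := pcore_max (pcore_pgroup _ _) nOG.
rewrite pHallE pcore_sub /=.
have eG : (#|G|`_pi = #|K|`_pi)%N.
  rewrite -oK (partnM _ K0 (prime_gt0 prq)) (@part_p'nat pi q) ?muln1 //.
  by rewrite pnatE // inE qpi.
rewrite eG -(card_Hall hK) eqn_leq [X in _ && X]subset_leq_card // andbT.
rewrite (card_Hall hK) -eG.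
apply: dvdn_leq; first exact: part_gt0.
rewrite -(part_pnat_id (pcore_pgroup pi G)).
exact: partn_dvd (cardG_gt0 _) (cardSg (pcore_sub _ _)).
Qed.
End Comp.

Local Close Scope group_scope.

Ltac slia := try (match goal with
  | |- context [primes ?n] => have := (erefl : @size (Equality.sort Datatypes_nat__canonical__eqtype_Equality) (primes n) = @size nat (primes n))
  | H : context [primes ?n] |- _ => have := (erefl : @size (Equality.sort Datatypes_nat__canonical__eqtype_Equality) (primes n) = @size nat (primes n))
  end); lia.

Definition thr (n i : nat) := nth n.+1 (primes n) (size (primes n) - i).
Definition pith (n i : nat) : nat_pred := [pred r | thr n i <= r].

Lemma thr_mem n i : i < size (primes n) -> thr n i.+1 \in primes n.
Proof. by move=> hlt; rewrite /thr mem_nth //; slia. Qed.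

Lemma thr_lt n i : i < size (primes n) -> thr n i.+1 < thr n i.
Proof.
move=> hlt; have m := thr_mem hlt.
case: i hlt m => [|i] hlt m.
  rewrite {2}/thr subn0 nth_default // ltnS.
  by move: m; rewrite mem_primes => /and3P[_ n0 d]; apply: dvdn_leq.
rewrite /thr; have h := sorted_ltn_nth ltn_trans n.+1 (sorted_primes n).
apply: h; rewrite ?inE; slia.
Qed.

Lemma nth_primes_mono n a b : a < size (primes n) -> b < size (primes n) ->
  (nth n.+1 (primes n) a <= nth n.+1 (primes n) b) = (a <= b).
Proof.
move=> ha hb; have [le|hlt] := leqP a b.
  case: (ltngtP a b) le => // [lab|->] _; last by rewrite leqnn.
  have h := sorted_ltn_nth ltn_trans n.+1 (sorted_primes n).
  by apply: ltnW; apply: h; rewrite ?inE.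
apply/negbTE; rewrite -ltnNge.
have h := sorted_ltn_nth ltn_trans n.+1 (sorted_primes n).
by apply: h; rewrite ?inE.
Qed.

Lemma nth_eq n a b : a < size (primes n) -> b < size (primes n) ->
  (nth n.+1 (primes n) a == nth n.+1 (primes n) b) = (a == b).
Proof.
by move=> ha hb; rewrite nth_uniq // primes_uniq.
Qed.

Lemma part_pith0 n : 0 < n -> n`_(pith n 0) = 1.
Proof.
move=> n0; apply: part_p'nat; apply/pnatP => // p pp dp.
rewrite !inE /thr subn0 nth_default // -ltnNge ltnS.
exact: dvdn_leq.
Qed.

Lemma part_pithk n : 0 < n -> n`_(pith n (size (primes n))) = n.
Proof.
move=> n0; apply: part_pnat_id; apply/pnatP => // p pp dp.
have mp : p \in primes n by rewrite mem_primes pp n0 dp.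
have hk : 0 < size (primes n) by case: (primes n) mp.
rewrite inE /thr subnn.
have [j hj ->] : exists2 j, j < size (primes n) & p = nth n.+1 (primes n) j.
  by exists (index p (primes n)); rewrite ?index_mem ?nth_index.
by rewrite nth_primes_mono.
Qed.

Lemma part_pith_step n i : 0 < n -> (forall p, prime p -> ~~ (p * p %| n)) ->
  i < size (primes n) ->
  n`_(pith n i.+1) = thr n i.+1 * n`_(pith n i).
Proof.
move=> n0 sqf hlt.
have sub : {subset pith n i <= pith n i.+1}.
  by move=> r; rewrite !inE => h; apply: leq_trans h; apply/ltnW/thr_lt.
have m := thr_mem hlt.
rewrite -{1}(partnC (pith n i) (part_gt0 _ n)) (partn_part _ sub) mulnC.
congr (_ * _).
rewrite -partnI.
rewrite (@eq_in_partn _ (pred1 (thr n i.+1))); last first.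
  move=> r; rewrite mem_primes => /and3P[pr _ dr].
  have mr : r \in primes n by rewrite mem_primes pr n0 dr.
  rewrite !inE.
  have [j hj ->] : exists2 j, j < size (primes n) & r = nth n.+1 (primes n) j.
    by exists (index r (primes n)); rewrite ?index_mem ?nth_index.
  rewrite /thr nth_primes_mono //; last by slia.
  have nj : nth n.+1 (primes n) j <= n.
    have : nth n.+1 (primes n) j \in primes n by rewrite mem_nth.
    by rewrite mem_primes => /and3P[_ _ d]; apply: dvdn_leq.
  rewrite nth_eq //; last by slia.
  case: i hlt sub m => [|i] hlt sub m.
    rewrite subn0 nth_default // -leqNgt nj andbT.
    by apply/idP/eqP => [h|->]; slia.
  rewrite nth_primes_mono //; last by slia.
  by apply/idP/eqP => [/andP[h1 h2]|->]; slia.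
rewrite p_part.
have pr : prime (thr n i.+1) by move: m; rewrite mem_primes => /andP[].
have dv : thr n i.+1 %| n by move: m; rewrite mem_primes => /and3P[].
have : logn (thr n i.+1) n = 1.
  have a : 1 <= logn (thr n i.+1) n by rewrite -pfactor_dvdn ?expn1.
  have b : ~~ (2 <= logn (thr n i.+1) n) by rewrite -pfactor_dvdn // sqf.
  slia.
by move=> ->; rewrite expn1.
Qed.

Definition addT (T : finType) (B : brace T) : Type := T.
Definition mulT (T : finType) (B : brace T) : Type := T.

Section BG.
Variables (T : finType) (B : brace T).
HB.instance Definition _ := Finite.on (addT B).
HB.instance Definition _ := Finite_isGroup.Build (addT B) (@baddA T B) (@badd0l T B) (@baddNl T B).
HB.instance Definition _ := Finite.on (mulT B).
HB.instance Definition _ := Finite_isGroup.Build (mulT B) (@bmulA T B) (@bmul1l T B) (@bmulVl T B).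

Local Notation "x + y" := (badd B x y).
Local Notation "- x" := (bopp B x).
Local Notation "x * y" := (bmul B x y).

Lemma one_zero : bone B = bzero B.
Proof.
have := bdist B (bone B) (bzero B) (bzero B).
rewrite !bmul1l !badd0l !badd0r => h.
have e1 : bone B = - (- bone B) := esym (@invgK (addT B) (bone B)).
rewrite e1 -h; exact: (@invg1 (addT B)).
Qed.


Lemma lam_add a x y : blambda B a (x + y) = blambda B a x + blambda B a y.
Proof.
rewrite /blambda bdist.
rewrite -!(baddA B); congr (_ + _); rewrite !(baddA B); done.
Qed.

Lemma mul_lam a x : a * x = a + blambda B a x.
Proof. rewrite /blambda baddA baddNr badd0l //. Qed.

Lemma lam_morphM a : {in [set: addT B] &, {morph (blambda B a : addT B -> addT B) : x y / (x * y)%g}}.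
Proof. by move=> x y _ _; apply: lam_add. Qed.

Definition lam_morph a := Morphism (lam_morphM a).


Hypothesis sqf : forall p, prime p -> ~~ (p * p %| #|T|)%N.

Definition upc (rho : nat_pred) := forall r s, prime r -> prime s -> (r %| #|T|)%N -> (s %| #|T|)%N -> (r <= s)%N ->
     r \in rho -> s \in rho.

Lemma card_addT : #|[set: addT B]| = #|T|.
Proof. by rewrite cardsT; apply: bij_eq_card; exists id. Qed.
Lemma card_mulT : #|[set: mulT B]| = #|T|.
Proof. by rewrite cardsT; apply: bij_eq_card; exists id. Qed.

Definition toT (y : addT B) : T := y.
Definition ofT (x : T) : addT B := x.
Definition toTm (y : mulT B) : T := y.
Definition ofTm (x : T) : mulT B := x.

Lemma memT (A : {set addT B}) x : (x \in toT @: A) = (ofT x \in A).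
Proof. by apply/imsetP/idP => [[y Ay ->] //|h]; exists (ofT x). Qed.
Lemma memTm (A : {set T}) y : (y \in ofTm @: A) = (toTm y \in A).
Proof. by apply/imsetP/idP => [[x Ax ->] //|h]; exists (toTm y). Qed.
Lemma cardT (A : {set addT B}) : #|toT @: A| = #|A|.
Proof. by apply: card_imset => x y. Qed.
Lemma cardTm (A : {set T}) : #|ofTm @: A| = #|A|.
Proof. by apply: card_imset => x y. Qed.

Variable rho : nat_pred.
Hypothesis up : upc rho.

Definition Oa := 'O_rho([set: addT B])%G.

Lemma hallA : (rho.-Hall([set: addT B]) Oa)%g.
Proof. by apply: tower; rewrite card_addT. Qed.

Lemma hallM : (rho.-Hall([set: mulT B]) 'O_rho([set: mulT B]))%g.
Proof. by apply: tower; rewrite card_mulT. Qed.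

Lemma lam_stable a x : x \in Oa -> blambda B a x \in Oa.
Proof.
move=> Ox.
have sub : (lam_morph a @* Oa \subset Oa)%g.
  rewrite (sub_normal_Hall hallA (pcore_normal _ _) (subsetT _)).
  by apply: morphim_pgroup; apply: pcore_pgroup.
by apply: (subsetP sub); apply: mem_morphim => //; rewrite inE.
Qed.

Definition Iset : {set T} := toT @: Oa.

Lemma cardI : #|Iset| = (#|T|`_rho)%N.
Proof. by rewrite cardT (card_Hall hallA) card_addT. Qed.


Lemma I_mul x y : x \in Iset -> y \in Iset -> x * y \in Iset.
Proof.
rewrite !memT => Ox Oy; rewrite mul_lam.
exact (@groupM _ Oa (ofT x) (ofT (blambda B x y)) Ox (lam_stable x Oy)).
Qed.

Lemma I_zero : bzero B \in Iset.
Proof. by rewrite memT; exact (@group1 _ Oa). Qed.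

Definition Om : {set mulT B} := ofTm @: Iset.

Lemma gsOm : group_set Om.
Proof.
apply/group_setP; split.
  by rewrite memTm (_ : toTm 1%g = bzero B) ?I_zero //; exact: one_zero.
by move=> x y; rewrite !memTm; apply: I_mul.
Qed.

Definition Omg := Group gsOm.

Lemma Om_pcore : Om = ('O_rho([set: mulT B]))%g.
Proof.
have cOm : #|Om| = (#|T|`_rho)%N by rewrite cardTm cardI.
have hOm : (rho.-Hall([set: mulT B]) Omg)%g.
  by rewrite pHallE subsetT /= cOm card_mulT.
have sub : (Omg \subset 'O_rho([set: mulT B]))%g.
  by rewrite (sub_normal_Hall hallM (pcore_normal _ _) (subsetT _)) (pHall_pgroup hOm).
apply/eqP; rewrite eqEcard sub /= (card_Hall hallM) card_mulT cOm leqnn //.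
Qed.

Lemma ideal_I : is_ideal B Iset.
Proof.
split; [|split; [|split; [|split]]].
- split; first exact: I_zero.
  split.
    move=> x y; rewrite !memT => Ox Oy.
    exact (@groupM _ Oa (ofT x) (ofT y) Ox Oy).
  move=> x; rewrite !memT => Ox.
  have h : ((ofT x)^-1 \in Oa)%g by rewrite groupV.
  exact h.
- split; first by rewrite one_zero I_zero.
  split; first exact: I_mul.
  move=> x Ix.
  have : ofTm x \in Omg by rewrite /= memTm.
  by rewrite -groupV /= memTm.
- move=> b x; rewrite !memT => Ox.
  have Nb : ((ofT b)^-1 \in 'N(Oa))%g.
    by rewrite (subsetP (normal_norm (pcore_normal _ _))) // inE.
  have := Ox; rewrite -(memJ_norm (ofT x) Nb) => h.
  have e : (ofT b * ofT x * (ofT b)^-1 = ofT x ^ (ofT b)^-1)%g by rewrite conjgE invgK mulgA.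
  change (ofT b * ofT x * (ofT b)^-1 \in Oa)%g; by rewrite e.
- move=> b x Ix.
  have Ox : ofTm x \in Om by rewrite memTm.
  have Nb : ((ofTm b)^-1 \in 'N(Om))%g.
    by rewrite Om_pcore (subsetP (normal_norm (pcore_normal _ _))) // inE.
  move: Ox; rewrite -(memJ_norm (ofTm x) Nb) memTm => h.
  have e : (ofTm b * ofTm x * (ofTm b)^-1 = ofTm x ^ (ofTm b)^-1)%g by rewrite conjgE invgK mulgA.
  change (toTm (ofTm b * ofTm x * (ofTm b)^-1)%g \in Iset); by rewrite e.
- move=> b x; rewrite !memT; exact: lam_stable.
Qed.

End BG.

Lemma bcosetE (T : finType) (B : brace T) (A : {set addT B}) (x : T) :
  bcoset B (@toT T B @: A) x = @toT T B @: (lcoset A (@ofT T B x)).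
Proof. by rewrite /bcoset /lcoset -!imset_comp; apply: eq_imset. Qed.

Lemma quot_orderE (T : finType) (B : brace T) (H G : {group addT B}) :
  quot_order B (@toT T B @: H) (@toT T B @: G) = #|lcosets H G|.
Proof.
rewrite /quot_order.
have -> : [set bcoset B (@toT T B @: H) x | x in @toT T B @: G] =
          [set @toT T B @: A | A : {set addT B} in lcosets H G].
  rewrite /lcosets -!imset_comp; apply: eq_imset => y /=.
  by rewrite bcosetE.
by rewrite card_imset //; apply: imset_inj => a b.
Qed.

Theorem corollary3p9 (T : finType) (B : brace T) :
  squarefree #|T| -> supersoluble B.
Proof.
move=> sqf.
set n := #|T|.
have n0 : 0 < n by apply/card_gt0P; exists (bzero B).
have up : forall i, upc T (pith n i).
  by move=> i r s _ _ _ _ rs; rewrite !inE => h; apply: leq_trans rs.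
have cO : forall i, #|Oa B (pith n i)| = n`_(pith n i).
  by move=> i; rewrite (card_Hall (hallA B sqf (up i))) card_addT.
exists (size (primes n)), (fun i => Iset B (pith n i)).
split.
- apply/eqP; rewrite eq_sym eqEcard sub1set I_zero cards1 /Iset cardT cO part_pith0 //.
- by apply/eqP; rewrite eqEcard subsetT cardsT /Iset cardT cO part_pithk //=.
- by move=> i _; apply: (ideal_I B sqf (up i)).
move=> i hi.
have sub : (Oa B (pith n i) \subset Oa B (pith n i.+1))%g.
  apply: pcore_max; last exact: pcore_normal.
  apply: sub_pgroup (pcore_pgroup _ _) => r; rewrite !inE => h.
  by apply: leq_trans h; apply/ltnW/thr_lt.
split.
  by rewrite /Iset; apply: imsetS.
right; rewrite /Iset quot_orderE card_lcosets.
have := Lagrange sub; rewrite !cO part_pith_step // mulnC => /eqP.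
rewrite eqn_pmul2r ?part_gt0 // => /eqP ->.
by have := thr_mem hi; rewrite mem_primes => /andP[].
Qed.
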